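(* Let $H$ be a tame histogram bounded from below by a horizontal segment $pq$ and from above by an $x$-monotone rectilinear $pq$-path $L$. Let $a,b\in L$ be such that $b$ is a bottom-most point of the subpath $L_{ab}$ of $L$ between $a$ and $b$. Then $\|L_{ab}\|\le 2|x(a)-x(b)|+|y(a)-y(b)|$.
   Context: A polygon is weakly simple if it can be approximated arbitrarily closely (vertex by vertex) by simple polygons. An $x$-monotone histogram is a rectilinear weakly simple polygon bounded by a horizontal segment $pq$ and an $x$-monotone rectilinear $pq$-path $L$. A chord of $H$ is a segment $cd$ with $c,d\in\partial H$ and $cd\subset H$. A tame histogram is an $x$-monotone histogram such that for every horizontal chord $cd$ with $c,d\in L$, the subpath $L_{cd}$ of $L$ between $c$ and $d$ satisfies $\|L_{cd}\|\le 2\|cd\|$. *)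

(* Defs.v *)
From HB Require Import structures.
From mathcomp Require Import all_boot all_order all_algebra.
Set Implicit Arguments. Unset Strict Implicit. Unset Printing Implicit Defensive.
Import Order.TTheory GRing.Theory Num.Theory.
Local Open Scope ring_scope.

Section Hist.
Variable R : realFieldType.

(* A rectilinear path L is given by its vertices v 0, ..., v m (m segments);
   p = v 0 and q = v m. A point of L is given by a position (i, t) with
   i < m and 0 <= t <= 1, denoting v i + t (v (i+1) - v i). *)

Definition on_path (m : nat) (i : nat) (t : R) : Prop :=
  (i < m)%N /\ 0 <= t <= 1.

Definition point (v : nat -> R * R) (i : nat) (t : R) : R * R :=
  ((v i).1 + t * ((v i.+1).1 - (v i).1), (v i).2 + t * ((v i.+1).2 - (v i).2)).

(* Euclidean length of segment i; for an axis-parallel segment this is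
   |dx| + |dy|. *)
Definition seglen (v : nat -> R * R) (i : nat) : R :=
  `|(v i.+1).1 - (v i).1| + `|(v i.+1).2 - (v i).2|.

Definition plen (v : nat -> R * R) (i : nat) (t : R) : R :=
  \sum_(k < i) seglen v k + t * seglen v i.

Definition sublen (v : nat -> R * R) (i : nat) (t : R) (j : nat) (u : R) : R :=
  `|plen v j u - plen v i t|.

Definition pos_le (i : nat) (t : R) (j : nat) (u : R) : Prop :=
  (i < j)%N \/ (i = j /\ t <= u).

Definition between (i : nat) (t : R) (j : nat) (u : R) (k : nat) (w : R) : Prop :=
  (pos_le i t k w /\ pos_le k w j u) \/ (pos_le j u k w /\ pos_le k w i t).

Definition xmono_rect_path (v : nat -> R * R) (m : nat) : Prop :=
  forall i, (i < m)%N ->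
    (v i).1 <= (v i.+1).1 /\ ((v i).1 = (v i.+1).1 \/ (v i).2 = (v i.+1).2).

Definition histogram (v : nat -> R * R) (m : nat) : Prop :=
  [/\ (0 < m)%N, xmono_rect_path v m, (v 0).2 = (v m).2, (v 0).1 < (v m).1
    & forall i, (i <= m)%N -> (v 0).2 <= (v i).2].

Definition in_H (v : nat -> R * R) (m : nat) (z : R * R) : Prop :=
  [/\ (v 0).1 <= z.1 <= (v m).1, (v 0).2 <= z.2 &
    exists i t, [/\ on_path m i t, (point v i t).1 = z.1 & z.2 <= (point v i t).2]].

Definition seg_in_H (v : nat -> R * R) (m : nat) (c d : R * R) : Prop :=
  forall l : R, 0 <= l <= 1 ->
    in_H v m (c.1 + l * (d.1 - c.1), c.2 + l * (d.2 - c.2)).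

Definition tame_histogram (v : nat -> R * R) (m : nat) : Prop :=
  histogram v m /\
  forall i t j u, on_path m i t -> on_path m j u ->
    (point v i t).2 = (point v j u).2 ->
    seg_in_H v m (point v i t) (point v j u) ->
    sublen v i t j u <= 2 * `|(point v i t).1 - (point v j u).1|.

End Hist.

(* Main.v *)
Require Import Defs.
From HB Require Import structures.
From mathcomp Require Import all_boot all_order all_algebra.
From mathcomp Require Import ring lra.
Import Order.TTheory GRing.Theory Num.Theory.
Local Open Scope ring_scope.
Set Implicit Arguments. Unset Strict Implicit.

Section Proof.
Variable R : realFieldType.
Variable v : nat -> R * R.
Variable m : nat.
Hypothesis Ht : tame_histogram v m.

Lemma pE1 i t : (point v i t).1 = (v i).1 + t * ((v i.+1).1 - (v i).1).
Proof. by []. Qed.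
Lemma pE2 i t : (point v i t).2 = (v i).2 + t * ((v i.+1).2 - (v i).2).
Proof. by []. Qed.

Lemma Hh : histogram v m. Proof. by case: Ht. Qed.

Lemma Xstep i : (i < m)%N -> (v i).1 <= (v i.+1).1.
Proof. by case: Hh => _ xm _ _ _ /xm []. Qed.

Lemma Rect i : (i < m)%N -> (v i).1 = (v i.+1).1 \/ (v i).2 = (v i.+1).2.
Proof. by case: Hh => _ xm _ _ _ /xm []. Qed.

Lemma Xmono i j : (i <= j)%N -> (j <= m)%N -> (v i).1 <= (v j).1.
Proof.
move=> ij; elim: j ij => [|j IH].
  by rewrite leqn0 => /eqP ->.
rewrite leq_eqVlt => /orP [/eqP -> //|]; rewrite ltnS => ij jm.
have := IH ij (ltnW jm); have := Xstep jm; lra.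
Qed.

Lemma Ylow i : (i <= m)%N -> (v 0).2 <= (v i).2.
Proof. by case: Hh => _ _ _ _; apply. Qed.

Lemma px_range i t : on_path m i t -> (v 0).1 <= (point v i t).1 <= (v m).1.
Proof.
case=> im /andP[t0 t1]; rewrite pE1.
have h1 := Xmono (leq0n i) (ltnW im).
have h2 := Xmono im (leqnn m).
have h3 := Xstep im.
apply/andP; split; nra.
Qed.

Lemma py_low i t : on_path m i t -> (v 0).2 <= (point v i t).2.
Proof.
case=> im /andP[t0 t1]; rewrite pE2.
have h1 := Ylow (ltnW im).
have h2 := Ylow im.
nra.
Qed.

Lemma plenS j : plen v j.+1 0 = plen v j 1.
Proof. by rewrite /plen big_ord_recr /=; ring. Qed.

Lemma plenD j u w : plen v j u = plen v j w + (u - w) * seglen v j.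
Proof. rewrite /plen; ring. Qed.

Lemma sl_ge0 j : 0 <= seglen v j.
Proof. by rewrite /seglen; apply: addr_ge0. Qed.

Lemma plen_le0 i j : (i <= j)%N -> plen v i 0 <= plen v j 0.
Proof.
move=> ij; elim: j ij => [|j IH]; first by rewrite leqn0 => /eqP ->.
rewrite leq_eqVlt => /orP [/eqP -> //|]; rewrite ltnS => ij.
rewrite plenS (plenD j 1 0); have := sl_ge0 j; have := IH ij; lra.
Qed.

Lemma plen_mono i t j u : pos_le i t j u -> 0 <= t <= 1 -> 0 <= u <= 1 ->
  plen v i t <= plen v j u.
Proof.
move=> [ij|[-> tu]] /andP[t0 t1] /andP[u0 u1]; last first.
  rewrite (plenD j u t); have := sl_ge0 j; nra.
rewrite (plenD i t 0) (plenD j u 0).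
have e := plenS i; rewrite (plenD i 1 0) in e.
have := plen_le0 ij; have := sl_ge0 i; have := sl_ge0 j.
rewrite e; nra.
Qed.

Lemma chord k w j u h : on_path m k w -> (point v k w).2 = h -> (point v j u).2 = h ->
  (point v k w).1 <= (point v j u).1 ->
  (forall x, (point v k w).1 <= x <= (point v j u).1 ->
     exists i t, [/\ on_path m i t, (point v i t).1 = x & h <= (point v i t).2]) ->
  seg_in_H v m (point v k w) (point v j u).
Proof.
move=> hc hk hj hle cov l /andP[l0 l1].
have hx : (point v k w).1 <= (point v k w).1 + l * ((point v j u).1 - (point v k w).1)
   <= (point v j u).1 by apply/andP; split; nra.
have [i [t [hit hx' hy]]] := cov _ hx.
split => /=.
- rewrite -hx'; exact: px_range hit.
- have := py_low hc; rewrite hk; move: hk hj; rewrite /point /= => -> ->; lra.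
- exists i, t; split => //; move: hk hj hy; rewrite /point /= => -> ->; lra.
Qed.

Section Start.
Variables (i0 : nat) (t0 : R).
Hypothesis H0 : on_path m i0 t0.

Definition x0 := (point v i0 t0).1.
Definition y0 := (point v i0 t0).2.

Fixpoint mv (j : nat) : R :=
  match j with
  | 0 => y0
  | k.+1 => if (i0 < k.+1)%N then Num.min (mv k) (v k.+1).2 else y0
  end.

Definition u0 j : R := if (i0 < j)%N then 0 else t0.

Lemma mv_pre j : (j <= i0)%N -> mv j = y0.
Proof. by case: j => //= j hj; rewrite ltnNge hj. Qed.

Lemma mv_S j : (i0 <= j)%N -> mv j.+1 = Num.min (mv j) (v j.+1).2.
Proof. by move=> h /=; rewrite ltnS h. Qed.

Lemma mv_anti k j : (k <= j)%N -> mv j <= mv k.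
Proof.
elim: j => [|j IH]; first by rewrite leqn0 => /eqP ->.
rewrite leq_eqVlt => /orP [/eqP -> //|]; rewrite ltnS => kj.
apply: le_trans (IH kj).
case: (ltnP i0 j.+1) => h.
  by rewrite mv_S // ge_min lexx.
by rewrite (mv_pre h) mv_pre // ltnW.
Qed.

Lemma mv_s j : (i0 <= j)%N -> mv j <= (point v j (u0 j)).2.
Proof.
move=> hj; rewrite /u0; case: (ltnP i0 j) => h.
  case: j hj h => // j hj h.
  rewrite mv_S // pE2 mul0r addr0 ge_min lexx orbT //.
have -> : j = i0 by apply/eqP; rewrite eqn_leq h hj.
by rewrite mv_pre.
Qed.

Lemma mv_lb h j : h <= y0 -> (forall k, (i0 < k)%N -> (k <= j)%N -> h <= (v k).2) ->
  h <= mv j.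
Proof.
move=> hy; elim: j => [|j IH] hk //=.
case: ifP => hi //.
rewrite le_min IH ?hk ?leqnn // => k ik kj.
by apply: hk => //; rewrite ltnW.
Qed.

Lemma u0_range j : (i0 <= j)%N -> 0 <= u0 j <= 1.
Proof.
move=> _; rewrite /u0; case: ifP => _; first by rewrite lexx ler01.
by case: H0.
Qed.

Definition cov (j : nat) (h : R) (k : nat) (w : R) :=
  (point v k w).1 <= (point v j (u0 j)).1 /\
  forall x, (point v k w).1 <= x <= (point v j (u0 j)).1 ->
      exists i t, [/\ on_path m i t, (point v i t).1 = x & h <= (point v i t).2].

Lemma find_c_base j h : j = i0 -> mv j <= h -> h <= (point v j (u0 j)).2 ->
  exists k w, [/\ ((k < j)%N \/ (k = i0 /\ w = t0)) /\
                  ((i0 < k)%N \/ (i0 = k /\ t0 <= w)), on_path m k w,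
     (point v k w).2 = h & cov j h k w].
Proof.
move=> ->.
rewrite mv_pre // /u0 ltnn => h1 h2.
have hy : h = y0 by apply/eqP; rewrite eq_le h2 h1.
exists i0, t0; split.
- by split; right; split.
- by [].
- by rewrite hy.
- rewrite /cov /u0 ltnn; split => // x /andP[x1 x2].
  have -> : x = (point v i0 t0).1 by apply/eqP; rewrite eq_le x1 x2.
  by exists i0, t0; split => //; rewrite hy.
Qed.

Lemma find_c j : (i0 <= j)%N -> (j < m)%N -> forall h, mv j <= h ->
  h <= (point v j (u0 j)).2 ->
  exists k w, [/\ ((k < j)%N \/ (k = i0 /\ w = t0)) /\
                  ((i0 < k)%N \/ (i0 = k /\ t0 <= w)), on_path m k w,
     (point v k w).2 = h & cov j h k w].
Proof.
elim: j => [|j IH] hij hjm h hmv hs.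
  by apply: find_c_base hmv hs; apply/eqP; move: hij; rewrite leqn0 eq_sym.
case: (ltnP i0 j.+1) => hij'; last first.
  have e : j.+1 = i0 by apply/eqP; rewrite eqn_leq hij hij'.
  by apply: find_c_base.
rewrite ltnS in hij'.
have u0S : u0 j.+1 = 0 by rewrite /u0 ltnS hij'.
have jm : (j < m)%N := ltnW hjm.
have hms := mv_s hij'.
have [ur0 ur1] : 0 <= u0 j /\ u0 j <= 1 by apply/andP; exact: u0_range.
have pos : (i0 < j)%N \/ (i0 = j /\ t0 <= 1).
  move: hij'; rewrite leq_eqVlt => /orP[/eqP ->|]; [right; split=>//; by case: H0 => _ /andP[]|by left].
have posw : forall w, u0 j <= w -> (i0 < j)%N \/ (i0 = j /\ t0 <= w).
  move=> w uw; move: hij'; rewrite leq_eqVlt => /orP[/eqP e|]; last by left.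
  by right; split => //; move: uw; rewrite /u0 -e ltnn.
move: hmv hs; rewrite mv_S // u0S !pE2 mul0r !addr0 => hmv hs.
have hxs := Xstep jm.
have hrect := Rect jm.
case: (ltP h (mv j)) => hh.
  have hY : (v j.+1).2 = h.
    apply/eqP; rewrite eq_le hs andbT; move: hmv; rewrite ge_min => /orP[|//].
    by rewrite leNgt hh.
  exists j, 1; split.
  - by split; [left|apply: posw].
  - by split => //; rewrite ler01 lexx.
  - by rewrite pE2 mul1r addrC subrK.
  - rewrite /cov u0S !pE1 mul0r addr0 mul1r addrC subrK; split => // x /andP[x1 x2].
    have -> : x = (v j.+1).1 by apply/eqP; rewrite eq_le x1 x2.
    exists j, 1; split => //; first by split => //; rewrite ler01 lexx.
    + by rewrite pE1 mul1r addrC subrK.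
    + by rewrite pE2 mul1r addrC subrK hY.
case: (leP h (point v j (u0 j)).2) => hs2.
  have [k [w [hkw hon hkh [c1 c2]]]] := IH hij' jm h hh hs2.
  exists k, w; split => //.
  - case: hkw => [[hk|hk] hk2]; split => //; [by left; rewrite ltnS ltnW | by right].
  - rewrite /cov u0S (pE1 j.+1 0) mul0r addr0; split.
      by apply: le_trans c1 _; rewrite pE1; nra.
    move=> x /andP[x1 x2].
    case: (leP x (point v j (u0 j)).1) => hx; first by apply: c2; rewrite x1 hx.
    move: hx; rewrite pE1 => hx.
    have dpos : 0 < (v j.+1).1 - (v j).1 by nra.
    have hY : (v j).2 = (v j.+1).2.
      case: hrect => // e; move: dpos; rewrite e subrr ltxx //.
    set t := (x - (v j).1) / ((v j.+1).1 - (v j).1).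
    have ht : t * ((v j.+1).1 - (v j).1) = x - (v j).1.
      by rewrite /t divfK // gt_eqF.
    exists j, t; split.
    + split => //; apply/andP; split; nra.
    + by rewrite pE1 ht addrC subrK.
    + by move: hs2; rewrite !pE2 hY !subrr !mulr0.
move: hs2; rewrite pE2 => hs2.
have dpos : 0 < (v j.+1).2 - (v j).2 by nra.
have hX : (v j).1 = (v j.+1).1.
  case: hrect => // e; move: dpos; rewrite e subrr ltxx //.
set w := (h - (v j).2) / ((v j.+1).2 - (v j).2).
have hw : w * ((v j.+1).2 - (v j).2) = h - (v j).2.
  by rewrite /w divfK // gt_eqF.
have uw : u0 j <= w by nra.
have w1 : w <= 1 by nra.
exists j, w; split.
- by split; [left|apply: posw].
- split => //; apply/andP; split => //; exact: le_trans uw.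
- by rewrite pE2 hw addrC subrK.
- rewrite /cov u0S !pE1 mul0r addr0 hX subrr mulr0 addr0; split => // x /andP[x1 x2].
  have -> : x = (v j.+1).1 by apply/eqP; rewrite eq_le x1 x2.
  exists j, w; split => //.
  + split => //; apply/andP; split => //; exact: le_trans uw.
  + by rewrite pE1 hX subrr mulr0 addr0.
  + by rewrite pE2 hw addrC subrK.
Qed.

Lemma claim_a : plen v i0 t0 - plen v i0 t0 <= 2 * ((point v i0 t0).1 - x0) + y0
   + (point v i0 t0).2 - 2 * Num.min (mv i0) (point v i0 t0).2.
Proof. rewrite mv_pre // /x0 /y0 minxx; lra. Qed.

Lemma claim j : (i0 <= j)%N -> (j < m)%N -> forall u, 0 <= u <= 1 ->
  (j = i0 -> t0 <= u) ->
  plen v j u - plen v i0 t0 <= 2 * ((point v j u).1 - x0) + y0 + (point v j u).2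
     - 2 * Num.min (mv j) (point v j u).2.
Proof.
elim/ltn_ind: j => j IH hij hjm u hu hju.
have CS : plen v j (u0 j) - plen v i0 t0 <= 2 * ((point v j (u0 j)).1 - x0) + y0
    + (point v j (u0 j)).2 - 2 * mv j.
  rewrite /u0; case: (ltnP i0 j) => hj.
    case: j IH hij hjm hju hj => // j IH hij hjm hju hj.
    rewrite ltnS in hj.
    have := IH j (ltnSn j) hj (ltnW hjm) 1.
    rewrite ler01 lexx => /(_ isT).
    have t01 : t0 <= 1 by case: H0 => _ /andP[].
    move=> /(_ (fun _ => t01)).
    rewrite plenS mv_S // !pE1 !pE2 !mul1r !mul0r !addr0 !(addrC (v j).1) !(addrC (v j).2) !subrK.
    by [].
  have e : j = i0 by apply/eqP; rewrite eqn_leq hj hij.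
  rewrite e mv_pre // /x0 /y0; lra.
have [ur0 ur1] : 0 <= u0 j /\ u0 j <= 1 by apply/andP; exact: u0_range.
have uu : u0 j <= u.
  rewrite /u0; case: ifP => h; first by case/andP: hu.
  apply: hju; apply/eqP; rewrite eqn_leq hij andbT; by rewrite leqNgt h.
have hms := mv_s hij.
have hxs := Xstep hjm.
case/andP: hu => hu0 hu1.
have Hpl := plenD j u (u0 j).
case: (Rect hjm) => hrect.
  have sl : seglen v j = `|(v j.+1).2 - (v j).2| by rewrite /seglen hrect subrr normr0 add0r.
  case: (leP 0 ((v j.+1).2 - (v j).2)) => hd.
    have hm : Num.min (mv j) (point v j u).2 = mv j.
      apply: min_l; apply: le_trans hms _; rewrite !pE2; nra.
    rewrite hm Hpl sl ger0_norm //.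
    move: CS; rewrite !pE1 !pE2 hrect subrr !mulr0; nra.
  have sln : seglen v j = - ((v j.+1).2 - (v j).2) by rewrite sl ltr0_norm.
  have key : forall w, u0 j <= w <= 1 -> mv j <= (point v j w).2 ->
      plen v j w - plen v i0 t0 <= 2 * ((point v j w).1 - x0) + y0 + (point v j w).2
        - 2 * mv j.
    move=> w /andP[w0 w1] hmw.
    have hws : (point v j w).2 <= (point v j (u0 j)).2 by rewrite !pE2; nra.
    have [k [w' [[hk1 hk2] hon hkh [c1 c2]]]] := find_c hij hjm hmw hws.
    have Cc : plen v k w' - plen v i0 t0 <= 2 * ((point v k w').1 - x0) + y0
        + (point v j w).2 - 2 * Num.min (mv k) (point v j w).2.
      case: hk1 => [hk|[ek ew]]; last first.
        rewrite ek ew in hkh *.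
        rewrite -hkh mv_pre // /x0 /y0 minxx; lra.
        rewrite -hkh; apply: IH => //.
        - by case: hk2 => [/ltnW|[-> _]].
        - by case: hon.
        - by case: hon.
        - by move=> e; case: hk2 => [|[_ //]]; rewrite e ltnn.
    have hkj : (k <= j)%N.
      case: hk1 => [/ltnW //|[-> _]]; exact: hij.
    have hmin : mv j <= Num.min (mv k) (point v j w).2.
      by rewrite le_min hmw mv_anti.
    have hxeq : (point v j w).1 = (point v j (u0 j)).1 by rewrite !pE1 hrect subrr !mulr0.
    have won : on_path m j w by split => //; rewrite w1 andbT; exact: le_trans w0.
    have T := (proj2 Ht) k w' j w hon won (etrans hkh (esym (erefl _))) _.
    have hseg : seg_in_H v m (point v k w') (point v j w).
      apply: (chord hon hkh (erefl _)); first by rewrite hxeq.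
      by rewrite hxeq.
    have := T hseg; rewrite /sublen hxeq => T'.
    have n1 : plen v j w - plen v k w' <= `|plen v j w - plen v k w'| by apply: ler_norm.
    have n2 : `|(point v k w').1 - (point v j (u0 j)).1| = (point v j (u0 j)).1 - (point v k w').1.
      by rewrite distrC ger0_norm // subr_ge0.
    move: T'; rewrite n2 => T'.
    lra.
  case: (leP (mv j) (point v j u).2) => hmu.
    by apply: key => //; rewrite uu hu1.
  set w := (mv j - (v j).2) / ((v j.+1).2 - (v j).2).
  have hw : w * ((v j.+1).2 - (v j).2) = mv j - (v j).2.
    by rewrite /w divfK // lt_eqF.
  move: hms hmu; rewrite !pE2 => hms hmu.
  have uw : u0 j <= w by nra.
  have wu : w <= u by nra.
  have a1 : u0 j <= w <= 1 by rewrite uw (le_trans wu hu1).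
  have a2 : mv j <= (point v j w).2 by rewrite pE2 hw addrC subrK.
  have K := key w a1 a2.
  move: K; rewrite (plenD j u w) sln !pE1 !pE2 hrect subrr !mulr0 => K.
  nra.
have sl : seglen v j = (v j.+1).1 - (v j).1.
  by rewrite /seglen hrect subrr normr0 addr0 ger0_norm // subr_ge0.
have hm : Num.min (mv j) (point v j u).2 = mv j.
  apply: min_l; apply: le_trans hms _; rewrite !pE2 hrect; lra.
rewrite hm Hpl sl.
move: CS; rewrite !pE1 !pE2 hrect subrr !mulr0; nra.
Qed.

End Start.
End Proof.

Unset Implicit Arguments.

Theorem lemma7p2 (R : realFieldType) (v : nat -> R * R) (m : nat)
  (ia : nat) (ta : R) (ib : nat) (tb : R) :
  tame_histogram v m ->
  on_path m ia ta -> on_path m ib tb ->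
  (forall k w, on_path m k w -> between ia ta ib tb k w ->
     (point v ib tb).2 <= (point v k w).2) ->
  sublen v ia ta ib tb <=
    2 * `|(point v ia ta).1 - (point v ib tb).1|
    + `|(point v ia ta).2 - (point v ib tb).2|.
Proof.
move=> Ht Ha Hb Hbot.
have Ya : (point v ib tb).2 <= (point v ia ta).2.
  apply: Hbot => //; case: (ltngtP ia ib) => h.
  - by left; split; [right|left].
  - by right; split; [left|right].
  - case: (leP ta tb) => h2; [left|right]; split; right; split => //; exact: ltW.
have ha := Ha; have hb := Hb.
case: Ha => iam hta; case: Hb => ibm htb.
have /andP[ta0 ta1] := hta; have /andP[tb0 tb1] := htb.
have nx1 : (point v ib tb).1 - (point v ia ta).1 <= `|(point v ia ta).1 - (point v ib tb).1|.
  by rewrite distrC; apply: ler_norm.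
have nx2 : (point v ia ta).1 - (point v ib tb).1 <= `|(point v ia ta).1 - (point v ib tb).1|.
  by apply: ler_norm.
have ny : (point v ia ta).2 - (point v ib tb).2 = `|(point v ia ta).2 - (point v ib tb).2|.
  by rewrite ger0_norm // subr_ge0.
have Yk : forall k, (k < m)%N -> between ia ta ib tb k 0 -> (point v ib tb).2 <= (v k).2.
  move=> k km hk; have := Hbot k 0; rewrite [(point v k 0).2]pE2 mul0r addr0; apply => //.
  by split => //; rewrite lexx ler01.
have [ab|ba] : pos_le ia ta ib tb \/ pos_le ib tb ia ta.
  case: (ltngtP ia ib) => h; [by left; left|by right; left|].
  by case: (leP ta tb) => h2; [left|right]; right; split => //; apply: ltW.
- have hle := plen_mono v ab hta htb.
  have iab : (ia <= ib)%N by case: ab => [/ltnW|[->]].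
  have hu : ib = ia -> ta <= tb.
    by move=> e; case: ab => [|[_ //]]; rewrite e ltnn.
  have C := claim Ht ha iab ibm htb hu.
  have M : (point v ib tb).2 <= Num.min (mv v ia ta ib) (point v ib tb).2.
    rewrite le_min lexx andbT; apply: mv_lb => // k k1 k2.
    apply: Yk; first exact: leq_ltn_trans k2 ibm.
    left; split; first by left.
    by move: k2; rewrite leq_eqVlt => /orP[/eqP ->|]; [right; split|left].
  rewrite /sublen ger0_norm ?subr_ge0 //.
  move: C; rewrite /x0 /y0 => C; lra.
- have hle := plen_mono v ba htb hta.
  have iba : (ib <= ia)%N by case: ba => [/ltnW|[->]].
  have hu : ia = ib -> tb <= ta.
    by move=> e; case: ba => [|[_ //]]; rewrite e ltnn.
  have C := claim Ht hb iba iam hta hu.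
  have M : (point v ib tb).2 <= Num.min (mv v ib tb ia) (point v ia ta).2.
    rewrite le_min Ya andbT; apply: mv_lb => // k k1 k2.
    apply: Yk; first exact: leq_ltn_trans k2 iam.
    right; split; first by left.
    by move: k2; rewrite leq_eqVlt => /orP[/eqP ->|]; [right; split|left].
  rewrite /sublen distrC ger0_norm ?subr_ge0 //.
  move: C; rewrite /x0 /y0 => C; lra.
Qed.
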